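(* Assume $\lfloor (M_1+\dots+M_n)/p\rfloor=n-1$ (ample reduction). For every $x=(x_1,\dots,x_n)\in\mathbb{F}_p^n$ with pairwise distinct coordinates and every $w\in\{c\in\mathbb{F}_p^n:\ \sum_im_ic_i=0\}$ there exists a unique $(c_1,\dots,c_{n-1})\in\mathbb{F}_p^{n-1}$ with $w=\sum_{l=1}^{n-1}c_lI^{[l]}(x)$.
   Context: $p,q$ are primes, $n$ a positive integer with $p>n\ge2$, $p>q$; $m_1,\dots,m_n$ are positive integers $<q$; $M_i$ is the least positive integer with $M_i\equiv -m_iq^{-1}\pmod p$. With $\Phi_p(x,z)=\prod_i(x-z_i)^{M_i}$ (here in an auxiliary variable, say $t$: $\Phi_p(t,z)=\prod_i(t-z_i)^{M_i}$), $I^{[l]}(z)\in\mathbb{F}_p[z_1,\dots,z_n]^n$ is the coefficient of $t^{lp-1}$ in $(\Phi_p/(t-z_1),\dots,\Phi_p/(t-z_n))$, and $I^{[l]}(x)$ denotes its value at $z=x$. *)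

(* Defs.v *)
From mathcomp Require Import all_boot all_algebra.
From mathcomp Require Import mpoly.
Unset Printing Implicit Defensive.
Import GRing.Theory.
Local Open Scope ring_scope.

(* M_i : the least positive integer congruent to -m_i q^{-1} mod p.
   The canonical representative r in [0,p) of -m_i/q in 'F_p is taken,
   replaced by p when r = 0 (the least positive integer in the class). *)
Definition Mexp (p q mi : nat) : nat :=
  let r := val (- (mi%:R : 'F_p) / (q%:R : 'F_p)) in
  if r == 0%N then p else r.

Definition Phi (p q n : nat) (m : 'I_n -> nat) : {poly {mpoly 'F_p[n]}} :=
  \prod_(j < n) ('X - ('X_j)%:P) ^+ (Mexp p q (m j)).

Definition Phi_div (p q n : nat) (m : 'I_n -> nat) (i : 'I_n) : {poly {mpoly 'F_p[n]}} :=
  \prod_(j < n) ('X - ('X_j)%:P) ^+ (Mexp p q (m j) - (i == j)).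

Definition Iz (p q n : nat) (m : 'I_n -> nat) (l : nat) (i : 'I_n) : {mpoly 'F_p[n]} :=
  (Phi_div p q n m i)`_(l * p - 1).

Definition Ix (p q n : nat) (m : 'I_n -> nat) (l : nat) (x : 'I_n -> 'F_p) : 'rV['F_p]_n :=
  \row_i (Iz p q n m l i).@[x].

(* Main.v *)
Require Import Defs.
From mathcomp Require Import all_boot all_algebra.
From mathcomp Require Import mpoly.
From mathcomp Require Import finfield.
From mathcomp Require Import zify ring.
Import GRing.Theory.
Local Open Scope ring_scope.
Set Warnings "-notation-overridden -ambiguous-paths -notation-incompatible-prefix".


Lemma deriv_big (R : comNzRingType) (I : eqType) (r : seq I) (G : I -> {poly R}) :
  uniq r -> (\prod_(j <- r) G j)^`() = \sum_(i <- r) (G i)^`() * \prod_(j <- r | j != i) G j.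
Proof.
elim: r => [|a r IH] /=; first by rewrite !big_nil derivC.
case/andP=> anr ur.
rewrite !big_cons derivM IH // eqxx /= big_distrr /=.
congr (_ + _).
  congr (_ * _); rewrite big_seq_cond [RHS]big_seq_cond; apply: eq_bigl => j.
  by case: (boolP (j \in r)) => //= jr; apply/esym/negP => /eqP ja; rewrite -ja jr in anr.
rewrite big_seq [RHS]big_seq; apply: eq_bigr => i ir.
rewrite big_cons.
have -> : (a != i) by apply/negP => /eqP ai; rewrite ai ir in anr.
by rewrite mulrCA.
Qed.

Lemma local_lemma (F : fieldType) (c : F) (k : nat) (G : {poly F}) :
  (forall j, (0 < j <= k)%N -> (j%:R : F) != 0) ->
  ('X - c%:P) ^+ k %| G^`() -> ('X - c%:P) ^+ k.+1 %| G - (G.[c])%:P.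
Proof.
move=> hk hd.
set s := 'X - c%:P.
have s0 : s != 0 by rewrite polyXsubC_eq0.
suff: forall j, (j <= k)%N -> s ^+ j.+1 %| G - (G.[c])%:P by apply.
elim=> [|j IH] hj.
  by rewrite expr1 dvdp_XsubCl /root hornerD hornerN hornerC subrr.
have /dvdpP [Q hQ] := IH (ltnW hj).
have hd' : s ^+ j.+1 %| G^`().
  by apply: dvdp_trans hd; apply: dvdp_exp2l.
have eG : G^`() = (G - (G.[c])%:P)^`() by rewrite derivB derivC subr0.
rewrite eG hQ derivM deriv_exp derivXsubC mul1r in hd'.
rewrite dvdp_addr in hd'; last by rewrite dvdp_mull.
rewrite hQ [s ^+ j.+2]exprS dvdp_mul2r ?expf_neq0 //.
move: hd' => /=; rewrite mulrnAr -mulr_natr mulrAC exprS dvdp_mul2r ?expf_neq0 //.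
rewrite mulr_natr -scaler_nat dvdpZr //.
by rewrite hk // ltn0Sn.
Qed.

Section Core.
Variable p : nat.
Hypothesis hp : prime p.
Local Notation F := 'F_p.
Variable n : nat.
Variable x : 'I_n -> F.
Hypothesis xinj : injective x.
Variable M : 'I_n -> nat.
Hypothesis M_gt0 : forall i, (0 < M i)%N.
Hypothesis M_ltp : forall i, (M i < p)%N.

Definition sX j : {poly F} := 'X - (x j)%:P.
Definition Phi0 := \prod_j sX j ^+ M j.
Definition Pd i := \prod_j sX j ^+ (M j - (i == j)).

Lemma sX_neq0 j : sX j != 0. Proof. by rewrite polyXsubC_eq0. Qed.

Lemma Pd_split i : Pd i = sX i ^+ (M i).-1 * \prod_(j | j != i) sX j ^+ M j.
Proof.
rewrite /Pd (bigD1 i) //= eqxx subn1; congr (_ * _).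
by apply: eq_bigr => j /negPf; rewrite eq_sym => ->; rewrite subn0.
Qed.

Lemma size_sXe j e : size (sX j ^+ e) = e.+1.
Proof. exact: size_exp_XsubC. Qed.

Lemma size_prod_sX (e : 'I_n -> nat) : size (\prod_j sX j ^+ e j) = (\sum_j e j).+1.
Proof.
rewrite size_prod; last by move=> j _; rewrite expf_neq0 // sX_neq0.
rewrite (eq_bigr (fun j => (e j + 1)%N)); last by move=> j _; rewrite size_sXe addn1.
rewrite big_split /= sum1_card cardT size_enum_ord.
by rewrite -addSn addnK.
Qed.

Local Notation D := (\sum_j M j)%N.
Hypothesis hD1 : (n.-1 * p <= D)%N.
Hypothesis hD2 : (D < n * p)%N.

Lemma size_Phi0 : size Phi0 = D.+1.
Proof. exact: size_prod_sX. Qed.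

Lemma size_Pd i : size (Pd i) = D.
Proof.
rewrite /Pd size_prod_sX (bigD1 i) //= [in RHS](bigD1 i) //= eqxx subn1.
rewrite (eq_bigr M); last by move=> j /negPf; rewrite eq_sym => ->; rewrite subn0.
by rewrite -addSn prednK.
Qed.

Lemma deriv_Phi0 : Phi0^`() = \sum_i Pd i *+ M i.
Proof.
rewrite /Phi0 deriv_big ?index_enum_uniq //; apply: eq_bigr => i _.
by rewrite deriv_exp /sX derivXsubC mul1r Pd_split -mulrnAl.
Qed.

Lemma gen_dvd (r : seq 'I_n) (e : 'I_n -> nat) (G : {poly F}) : uniq r ->
  (forall i, i \in r -> sX i ^+ e i %| G) -> \prod_(j <- r) sX j ^+ e j %| G.
Proof.
elim: r => [|a r IH] /=; first by rewrite big_nil dvd1p.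
case/andP => anr ur h.
rewrite big_cons Gauss_dvdp.
  apply/andP; split; first by apply: h; rewrite mem_head.
  by apply: IH => // i ir; apply: h; rewrite in_cons ir orbT.
apply: coprimep_expl; rewrite coprimep_sym /sX coprimep_XsubC /root horner_prod.
rewrite prodf_seq_neq0; apply/allP => j jr /=.
rewrite horner_exp hornerXsubC expf_neq0 // subr_eq0; apply/eqP => /xinj eq.
by rewrite eq jr in anr.
Qed.

Lemma dvd_Phi0 (G : {poly F}) : (forall i, sX i ^+ M i %| G) -> Phi0 %| G.
Proof. by move=> h; apply: gen_dvd; rewrite ?index_enum_uniq. Qed.

Definition piX i := \prod_(j | j != i) sX j.

Lemma piX_eval i k : (piX i).[x k] = if k == i then (piX i).[x k] else 0.
Proof.
case: eqP => // /eqP ki.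
by rewrite /piX horner_prod (bigD1 k) //= /sX hornerXsubC subrr mul0r.
Qed.

Lemma piX_eval_neq0 i : (piX i).[x i] != 0.
Proof.
rewrite /piX horner_prod; apply/prodf_neq0 => j ji.
by rewrite /sX hornerXsubC subr_eq0; apply/negP => /eqP /xinj ij; rewrite ij eqxx in ji.
Qed.

Lemma size_piX i : size (piX i) = n.
Proof.
rewrite /piX size_prod; last by move=> j _; rewrite sX_neq0.
rewrite (eq_bigr (fun _ => 2%N)); last by move=> j _; rewrite /sX size_XsubC.
rewrite sum_nat_const.
have hc : #|(fun j : 'I_n => j != i)| = n.-1 by move: (cardC1 i); rewrite card_ord.
rewrite hc; have := ltn_ord i; lia.
Qed.

Lemma lagrange_ex (v : 'I_n -> F) : exists V : {poly F}, (size V <= n)%N /\ forall i, V.[x i] = v i.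
Proof.
exists (\sum_i (v i / (piX i).[x i]) *: piX i); split.
  apply: (big_ind (fun P : {poly F} => size P <= n)%N) => [|u w hu hw|i _].
  - by rewrite size_poly0.
  - by apply: leq_trans (size_add _ _) _; rewrite geq_max hu hw.
  - by apply: leq_trans (size_scale_leq _ _) _; rewrite size_piX.
move=> k; rewrite horner_sum (bigD1 k) //= big1 ?addr0.
  by rewrite hornerZ divfK // piX_eval_neq0.
move=> i ik; have ki : (k == i) = false by rewrite eq_sym (negPf ik).
  by rewrite hornerZ [(piX i).[x k]]piX_eval ki mulr0.
Qed.

Lemma Pd_fact i : Pd i = (\prod_j sX j ^+ (M j).-1) * piX i.
Proof.
rewrite /Pd /piX [\prod_(j | j != i) _]big_mkcond -big_split /=; apply: eq_bigr => j _.
have [ji|ji] := eqVneq j i; first by rewrite ji subn1 /= mulr1.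
by rewrite subn0 -exprSr prednK.
Qed.

Lemma Pd_indep (c : 'I_n -> F) : \sum_i c i *: Pd i = 0 -> forall i, c i = 0.
Proof.
move=> h k.
have e : (\prod_j sX j ^+ (M j).-1) * \sum_i c i *: piX i = \sum_i c i *: Pd i.
  rewrite big_distrr /=; apply: eq_bigr => i _; by rewrite Pd_fact scalerAr.
move: e; rewrite h => e; move: e.
move/eqP; rewrite mulf_eq0 => /orP [|/eqP hs].
  have Qnz : \prod_j sX j ^+ (M j).-1 != 0.
    by apply/prodf_neq0 => j _; rewrite expf_neq0 // sX_neq0.
  by rewrite (negPf Qnz).
have := congr1 (fun P => P.[x k]) hs; rewrite horner_sum hornerC (bigD1 k) //= big1 ?addr0.
  by rewrite hornerZ => /eqP; rewrite mulf_eq0 (negPf (piX_eval_neq0 k)) orbF => /eqP.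
move=> i ik; have ki : (k == i) = false by rewrite eq_sym (negPf ik).
  by rewrite hornerZ [(piX i).[x k]]piX_eval ki mulr0.
Qed.

Lemma main_indep (a : 'I_n -> F) :
  (forall l, (0 < l < n)%N -> \sum_i a i * (Pd i)`_(l * p - 1) = 0) ->
  exists b : F, forall i, a i = b * (M i)%:R.
Proof.
move=> hyp.
set Fp := \sum_i a i *: Pd i.
have p0 : (0 < p)%N by apply: prime_gt0.
have coefFp k : Fp`_k = \sum_i a i * (Pd i)`_k.
  by rewrite coef_sum; apply: eq_bigr => i _; rewrite coefZ.
have highPd k i : (D <= k)%N -> (Pd i)`_k = 0.
  by move=> h; rewrite nth_default // size_Pd.
have highF k : (D <= k)%N -> Fp`_k = 0.
  by move=> h; rewrite coefFp big1 // => i _; rewrite highPd ?mulr0.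
have hF0 k : (p %| k.+1)%N -> Fp`_k = 0.
  move=> /dvdnP [l hl].
  case: (ltnP l n) => hln.
    have l0 : (0 < l)%N by case: l hl {hln} => //; rewrite mul0n.
    have -> : k = (l * p - 1)%N by rewrite -hl subn1.
    by rewrite coefFp hyp // l0 hln.
  apply: highF; have := leq_mul hln (leqnn p); lia.
pose H : {poly F} := \poly_(k < D.+1) (if k is k'.+1 then Fp`_k' / (k%:R) else 0).
have dH : H^`() = Fp.
  apply/polyP => k; rewrite coef_deriv coef_poly /=.
  case: (ltnP k.+1 D.+1) => hk.
    have [h0|h0] := eqVneq ((k.+1)%:R : F) 0.
      have hd : (p %| k.+1)%N by rewrite (dvdn_pcharf (pchar_Fp hp)) h0.
      by rewrite hF0 // mul0r mul0rn.
    by rewrite -[RHS](divfK h0) mulr_natr.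
  by rewrite mul0rn highF.
have sH : (size H <= D.+1)%N by apply: size_poly.
have [V [sV hV]] := lagrange_ex (fun i => H.[x i]).
pose W := V ^+ p.
have dW : W^`() = 0 by rewrite deriv_exp -scaler_nat pchar_Fp_0 // scale0r.
have eW i : W.[x i] = H.[x i].
  by rewrite horner_exp hV; have := expf_card (H.[x i]); rewrite card_Fp.
have sW : (size W <= D.+1)%N.
  have := size_exp V p; rewrite -/W => e.
  have : ((size V).-1 * p <= n.-1 * p)%N by apply: leq_mul => //; lia.
  move=> h; have : ((size W).-1 <= D)%N by rewrite e; apply: leq_trans h hD1.
  lia.
pose Ht := H - W.
have dHt : Ht^`() = Fp by rewrite derivB dH dW subr0.
have divi i : sX i ^+ M i %| Ht.
  have h1 : sX i ^+ (M i).-1 %| Ht^`().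
    rewrite dHt /Fp; apply: (big_ind (fun P => sX i ^+ (M i).-1 %| P)) => [|u v hu hv|j _].
    - exact: dvdp0.
    - exact: dvdp_add.
    rewrite -mul_polyC; apply: dvdp_mull; rewrite /Pd (bigD1 i) //=; apply: dvdp_mulr.
    by apply: dvdp_exp2l; case: (j == i); rewrite ?subn1 ?subn0 // leq_pred.
  have := @local_lemma F (x i) (M i).-1 Ht _ h1.
  rewrite prednK // /Ht hornerD hornerN eW subrr subr0; apply.
  move=> j /andP [j0 jM]; rewrite -(dvdn_pcharf (pchar_Fp hp)); apply/negP => /(dvdn_leq j0).
  have := M_ltp i; lia.
have dPhi : Phi0 %| Ht by apply: dvd_Phi0.
have [b hb] : exists b, Ht = b *: Phi0.
  case/dvdpP: dPhi => Qt hQt.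
  have [Q0|Qnz] := eqVneq Qt 0; first by exists 0; rewrite hQt Q0 mul0r scale0r.
  have sHt : (size Ht <= D.+1)%N.
    by rewrite /Ht; apply: leq_trans (size_add _ _) _; rewrite size_opp geq_max sH sW.
  have Pnz : Phi0 != 0 by rewrite -size_poly_eq0 size_Phi0.
  move: sHt; rewrite hQt size_mul // size_Phi0 => sQ.
  have sQ1 : (size Qt <= 1)%N by move: sQ; rewrite addnS /= -[(D.+1)%N]add1n leq_add2r.
  by exists (Qt`_0); rewrite {1}(size1_polyC sQ1) mul_polyC.
exists b.
have : \sum_i (a i - b * (M i)%:R) *: Pd i = 0.
  have e1 : Fp = b *: Phi0^`() by rewrite -derivZ -hb dHt.
  rewrite deriv_Phi0 scaler_sumr in e1.
  rewrite (eq_bigr (fun i => a i *: Pd i - b *: (Pd i *+ M i))); last first.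
    by move=> i _; rewrite scalerBl -scalerA scaler_nat.
  by rewrite sumrB -/Fp -e1 subrr.
move/Pd_indep => h i; apply/eqP; by rewrite -subr_eq0 h.
Qed.

Lemma hyper l : (0 < l)%N -> \sum_i (M i)%:R * (Pd i)`_(l * p - 1) = 0.
Proof.
move=> l0.
have lp : ((l * p - 1).+1 = l * p)%N by rewrite subn1 prednK // muln_gt0 l0 prime_gt0.
have : (Phi0^`())`_(l * p - 1) = (\sum_i Pd i *+ M i)`_(l * p - 1) by rewrite deriv_Phi0.
rewrite coef_deriv lp mulrnA mulrn_pchar ?pchar_Fp // coef_sum => e.
rewrite [RHS]e; apply: eq_bigr => i _; by rewrite coefMn mulr_natl.
Qed.
End Core.

Lemma Iz_eval (p q n : nat) (m : 'I_n -> nat) (l : nat) (i : 'I_n) (x : 'I_n -> 'F_p) :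
  (Iz p q n m l i).@[x] = (Pd p n x (fun j => Mexp p q (m j)) i)`_(l * p - 1).
Proof.
have e : map_poly (meval x) (Phi_div p q n m i) = Pd p n x (fun j => Mexp p q (m j)) i.
  rewrite /Phi_div rmorph_prod /Pd /sX.
  apply: eq_bigr => j _.
  rewrite rmorphXn /= map_polyXsubC; congr (('X - _%:P) ^+ _); exact: mevalXU.
by rewrite /Iz -(coef_map (meval x)) e.
Qed.

Theorem corollary7p7 (p q n : nat) (m : 'I_n -> nat)
  (hp : prime p) (hq : prime q) (hn : (2 <= n)%N) (hpn : (n < p)%N) (hpq : (q < p)%N)
  (hm : forall i, (0 < m i < q)%N)
  (ample : ((\sum_(i < n) Mexp p q (m i)) %/ p)%N = n.-1) :
  forall x : 'I_n -> 'F_p, injective x ->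
  forall w : 'rV['F_p]_n, \sum_(i < n) (m i)%:R * w 0 i = 0 ->
  exists! c : 'rV['F_p]_(n.-1),
    w = \sum_(l < n.-1) c 0 l *: Ix p q n m l.+1 x.
Proof.
move=> x xinj w hw.
pose M := fun i => Mexp p q (m i).
have p0 : (0 < p)%N by apply: prime_gt0.
have hq0 : (q%:R : 'F_p) != 0.
  by rewrite -(dvdn_pcharf (pchar_Fp hp)) gtnNdvd // prime_gt0.
have hm0 i : ((m i)%:R : 'F_p) != 0.
  have := hm i; case/andP => h1 h2.
  by rewrite -(dvdn_pcharf (pchar_Fp hp)) gtnNdvd // (ltn_trans h2).
pose eF i : 'F_p := - (m i)%:R / q%:R.
have eF0 i : eF i != 0 by rewrite mulf_neq0 ?oppr_eq0 ?invr_eq0 ?hm0.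
have valeF i : val (eF i) != 0%N.
  apply/eqP => h; move: (eF0 i); rewrite -[eF i]natr_Zp h; by rewrite eqxx.
have Mdef i : M i = val (eF i) by rewrite /M /Mexp -/(eF i) (negPf (valeF i)).
have Mval i : ((M i)%:R : 'F_p) = eF i by rewrite Mdef natr_Zp.
have M_gt0 i : (0 < M i)%N by rewrite Mdef lt0n valeF.
have M_ltp i : (M i < p)%N by rewrite Mdef; move: (ltn_ord (eF i)); rewrite [X in (_ < X)%N -> _]Fp_cast.
have mM i : ((m i)%:R : 'F_p) = - q%:R * (M i)%:R.
  by rewrite Mval /eF; field.
have hD1 : (n.-1 * p <= \sum_j M j)%N by rewrite -ample; apply: leq_divM.
have hD2 : (\sum_j M j < n * p)%N.
  have := ltn_ceil (\sum_j M j) p0; rewrite /M ample prednK //; lia.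
pose A : 'M['F_p]_(n.-1, n) := \matrix_(l, i) (Pd p n x M i)`_(l.+1 * p - 1).
have eI : forall l : 'I_n.-1, Ix p q n m l.+1 x = row l A.
  by move=> l; apply/rowP => i; rewrite !mxE Iz_eval.
have eS (c : 'rV['F_p]_(n.-1)) : \sum_(l < n.-1) c 0 l *: Ix p q n m l.+1 x = c *m A.
  by rewrite mulmx_sum_row; apply: eq_bigr => l _; rewrite eI.
pose Mrow : 'rV['F_p]_n := \row_i (M i)%:R.
have kerT : (kermx A^T <= Mrow)%MS.
  apply/row_subP => r; set a := row r (kermx A^T).
  have ha : a *m A^T = 0 by rewrite -row_mul mulmx_ker row0.
  have [b hb] : exists b : 'F_p, forall i, a 0 i = b * (M i)%:R.
    apply: (@main_indep p hp n x xinj M M_gt0 M_ltp hD1 hD2 (fun i => a 0 i)).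

    move=> l /andP [l0 ln].
    have hl : (l.-1 < n.-1)%N by lia.
    have := congr1 (fun v : 'rV['F_p]_(n.-1) => v 0 (Ordinal hl)) ha.
    rewrite [X in _ = X]mxE mxE => e; apply: (etrans _ e); apply: eq_bigr => i _; rewrite !mxE /=.
    by rewrite prednK.
  have -> : a = b *: Mrow by apply/rowP => i; rewrite hb !mxE.
  by apply: scalemx_sub; apply: submx_refl.
have rA : \rank A = n.-1.
  have h1 := mxrankS kerT.
  have h2 := rank_leq_row Mrow.
  have h3 := mxrank_ker A^T.
  have h4 := rank_leq_row A.
  rewrite mxrank_tr in h3; lia.
have rfA : row_free A by rewrite /row_free rA.
have hMT : A *m Mrow^T = 0.
  apply/matrixP => l k; rewrite !mxE.
  apply: (etrans _ (@hyper p hp n x M l.+1 (ltn0Sn l))).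
  by apply: eq_bigr => i _; rewrite !mxE mulrC.
have hwT : w *m Mrow^T = 0.
  apply/matrixP => i k; rewrite !mxE.
  have : - q%:R * \sum_j w 0 j * (M j)%:R = 0.
    apply: (etrans _ hw); rewrite big_distrr; apply: eq_bigr => j _; by rewrite ?mxE mM /= mulrA mulrAC.
  move/eqP; rewrite mulf_eq0 oppr_eq0 (negPf hq0) /= => /eqP e.
  apply: (etrans _ e); apply: eq_bigr => j _; by rewrite !mxE (ord1 i).
have i0 : 'I_n := Ordinal (leq_trans (isT : (0 < 2)%N) hn).
have Mnz : Mrow != 0.
  apply/eqP => /matrixP /(_ 0 i0); rewrite !mxE => h.
  by move: (eF0 i0); rewrite -Mval h eqxx.
have rK : \rank (kermx Mrow^T) = n.-1 by rewrite mxrank_ker mxrank_tr rank_rV Mnz subn1.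
have sAK : (A <= kermx Mrow^T)%MS by rewrite sub_kermx hMT.
have KA : (kermx Mrow^T <= A)%MS.
  by have [_ <-] := mxrank_leqif_sup sAK; rewrite rA rK.
have sWA : (w <= A)%MS by apply: submx_trans KA; rewrite sub_kermx hwT.
case/submxP: sWA => c hc.
exists c; split; first by rewrite eS.
move=> c' hc'; apply: (row_free_inj rfA) => /=.
by rewrite -hc hc' eS.
Qed.
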